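(* Consider any economy $\mathcal{E}$ (as in the context) such that either (1) in every state, all firms have the same ranking of workers (firms have possibly state-specific assortative preferences), or (2) $\mathcal{E}$ satisfies the SPC*. Then, considering Bayesian Nash equilibria in which firms report truthfully, $\mathcal{E}$ has a unique BNE outcome, namely the one that yields in each state $\theta$ the unique stable matching (for the true preferences) of $\mathcal{M}(\theta)$.
   Context: Matching market: $\mathcal{M}=(F,W,U)$ with finite firms $F=\{f_i\}_{i\in[m]}$, finite workers $W=\{w_j\}_{j\in[n]}$, utilities $u^f_{ij}$ of firm $f_i$ from worker $w_j$ and $u^w_{ij}$ of worker $w_j$ from firm $f_i$; unmatched utility is $0$; all preferences strict; all pairs mutually acceptable (all match utilities $>0$). An economy is $\mathcal{E}=(F,W,\{U(\theta)\}_{\theta\in\Theta},\Theta,\Psi)$ with finite $\Theta$, full-support prior $\Psi$, market $\mathcal{M}(\theta)=(F,W,U(\theta))$ in state $\theta$; workers' utilities are state-independent, firms' may depend on $\theta$. Standing assumption: each $\mathcal{M}(\theta)$ has a unique stable matching. Game: $\theta$ drawn by $\Psi$; firms observe $\theta$; each worker knows only his own preferences; all simultaneously submit rank-ordered lists of acceptable partners; firm-proposing Deferred Acceptance is run on the reports. Firms report truthfully; a worker's strategy is one rank-ordered list; a BNE is a profile where each worker's list maximizes his expected utility under $\Psi$. The outcome of a BNE is the matching produced in each state. Sub-market of $(F,W,U)$: $(F',W',U')$ with $F'\subseteq F$, $W'\subseteq W$, $U'$ the restriction of $U$. $(f,w)$ is a top-top match of a sub-market if $w$ is $f$'s favorite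 worker in it and $f$ is $w$'s favorite firm in it. A market satisfies the Sequential Preference Condition (SPC) if there are orderings $f_1,\dots,f_m$ of the firms and $w_1,\dots,w_n$ of the workers such that for each $i\le\min(m,n)$, $(f_i,w_i)$ is a top-top match of the sub-market induced by $\{f_j,w_j\}_{j\ge i}$; $(f_i,w_i)$ and its agents are said to have order $i$. An economy satisfies the SPC if each $\mathcal{M}(\theta)$ does, with possibly state-specific orderings $f_{1|\theta},\dots,f_{m|\theta}$ and $w_{1|\theta},\dots,w_{n|\theta}$. An economy satisfies the SPC* if it satisfies the SPC and for every state $\theta$, every $i\le\min(m,n)$ and every firm $f$: if $w_{i|\theta}$ strictly prefers $f$ to $f_{i|\theta}$, then for every state $\theta'$ there is $i'<i$ (possibly depending on $\theta'$) with $f=f_{i'|\theta'}$. *)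

(* Defs.v *)
From mathcomp Require Import all_boot all_order all_algebra.
Set Implicit Arguments. Unset Strict Implicit. Unset Printing Implicit Defensive.
Import Order.TTheory GRing.Theory Num.Theory.
Local Open Scope ring_scope.

Section Market.
Variables (R : realFieldType) (F W : finType).

(* A matching: each worker is matched to at most one firm (None = unmatched);
   it is a matching when no firm is matched to two workers. *)
Definition matching := {ffun W -> option F}.

Definition is_matching (mu : matching) : Prop :=
  forall w1 w2 f, mu w1 = Some f -> mu w2 = Some f -> w1 = w2.

(* Utilities of a market: uf f w (firm f from worker w), uw f w (worker w from firm f). *)
Variables (uf uw : F -> W -> R).

Definition worker_util (mu : matching) (w : W) : R :=
  if mu w is Some f then uw f w else 0.

Definition firm_util (mu : matching) (f : F) : R :=
  if [pick w | mu w == Some f] is Some w then uf f w else 0.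

Definition stable (mu : matching) : Prop :=
  [/\ is_matching mu,
      (forall w f, mu w = Some f -> 0 <= uw f w /\ 0 <= uf f w) &
      (forall f w, ~ (worker_util mu w < uw f w /\ firm_util mu f < uf f w))].

Definition top_top (fs : seq F) (ws : seq W) (f : F) (w : W) : Prop :=
  (forall w', w' \in ws -> uf f w' <= uf f w) /\
  (forall f', f' \in fs -> uw f' w <= uw f w).

(* fo, wo are orderings (enumerations without repetition) of all firms and all
   workers witnessing the Sequential Preference Condition (0-based indices). *)
Definition SPC_orderings (fo : seq F) (wo : seq W) : Prop :=
  [/\ perm_eq fo (enum F), perm_eq wo (enum W) &
      forall i f w, (i < minn #|F| #|W|)%N ->
        onth fo i = Some f -> onth wo i = Some w ->
        top_top (drop i fo) (drop i wo) f w].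

Definition SPC : Prop := exists fo wo, SPC_orderings fo wo.

End Market.

Section DA.
Variables (F W : finType).
Variables (P : F -> seq W) (Q : W -> seq F).
(* P f: firm f's reported list (most preferred first, only acceptable workers);
   Q w: worker w's reported list. *)

(* r f = number of rejections firm f has received so far; f currently
   proposes to the (r f)-th entry of its list, if any. *)
Definition da_target (r : {ffun F -> nat}) (f : F) : option W := onth (P f) (r f).

Definition da_held (r : {ffun F -> nat}) (w : W) : option F :=
  [pick f | (da_target r f == Some w) && (f \in Q w) &
     [forall g, ((da_target r g == Some w) && (g \in Q w)) ==>
                (index f (Q w) <= index g (Q w))%N]].

Definition da_step (r : {ffun F -> nat}) : {ffun F -> nat} :=
  [ffun f => if da_target r f is Some w then
               (if da_held r w == Some f then r f else (r f).+1)
             else r f].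

(* With lists of length <= #|W|, at most #|F| * #|W| rejections can happen,
   so the procedure has terminated after that many rounds. *)
Definition DA : {ffun W -> option F} :=
  let r := iter (#|F| * #|W|).+1 da_step [ffun _ => 0%N] in
  [ffun w => da_held r w].

End DA.

Section Economy.
Variables (R : realFieldType) (F W Th : finType).
Variables (uf : Th -> F -> W -> R) (uw : F -> W -> R) (Psi : Th -> R).

Definition economy_ok : Prop :=
  [/\ (forall th, 0 < Psi th), \sum_(th : Th) Psi th = 1,
      (forall th f w, 0 < uf th f w) /\ (forall f w, 0 < uw f w),
      (forall th f, injective (uf th f)) &
      (forall w, injective (uw ^~ w))].

Definition unique_stable : Prop :=
  forall th, exists! mu : matching F W, stable (uf th) uw mu.

Definition firm_list (th : Th) (f : F) : seq W :=
  sort (fun w1 w2 => uf th f w2 <= uf th f w1) (enum W).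

Definition profile := W -> seq F.

Definition outcome (s : profile) (th : Th) : matching F W :=
  DA (firm_list th) s.

Definition exp_util (s : profile) (w : W) : R :=
  \sum_(th : Th) Psi th * worker_util uw (outcome s th) w.

Definition deviate (s : profile) (w : W) (l : seq F) : profile :=
  fun w' => if w' == w then l else s w'.

Definition BNE (s : profile) : Prop :=
  (forall w, uniq (s w)) /\
  (forall w (l : seq F), uniq l -> exp_util (deviate s w l) w <= exp_util s w).

Definition common_firm_ranking : Prop :=
  forall th f g w1 w2, (uf th f w1 < uf th f w2) <-> (uf th g w1 < uf th g w2).

Definition SPC_star : Prop :=
  exists (fo : Th -> seq F) (wo : Th -> seq W),
    (forall th, SPC_orderings (uf th) uw (fo th) (wo th)) /\
    (forall th i fi wi f, (i < minn #|F| #|W|)%N ->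
       onth (fo th) i = Some fi -> onth (wo th) i = Some wi ->
       uw fi wi < uw f wi ->
       forall th', exists2 i', (i' < i)%N & onth (fo th') i' = Some f).

End Economy.

(* Main.v *)
Require Import Defs.
From mathcomp Require Import all_boot all_order all_algebra.
From mathcomp Require Import zify.
Import Order.TTheory GRing.Theory Num.Theory.
Local Open Scope ring_scope.
Set Implicit Arguments. Unset Strict Implicit. Unset Printing Implicit Defensive.

Lemma onth_index (T : eqType) (s : seq T) x : x \in s -> onth s (index x s) = Some x.
Proof. by move=> xs; rewrite onthE (nth_map x) ?index_mem // nth_index. Qed.

Lemma onth_someP (T : eqType) (s : seq T) i x :
  onth s i = Some x -> (i < size s)%N /\ nth x s i = x.
Proof.
move=> h; split; last exact: onth_nth h.
by rewrite -onthTE h.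
Qed.

Section DAT.
Variables (F W : finType) (P : F -> seq W).
Hypothesis HP : forall f, perm_eq (P f) (enum W).

Lemma memP f w : w \in P f. Proof. by rewrite (perm_mem (HP f)) mem_enum. Qed.
Lemma uniqP f : uniq (P f). Proof. by rewrite (perm_uniq (HP f)) enum_uniq. Qed.
Lemma sizeP f : size (P f) = #|W|. Proof. by rewrite (perm_size (HP f)) -cardE. Qed.
Lemma idx_lt f w : (index w (P f) < #|W|)%N. Proof. by rewrite -(sizeP f) index_mem memP. Qed.
Lemma idx_inj f w1 w2 : index w1 (P f) = index w2 (P f) -> w1 = w2.
Proof. by move=> h; rewrite -(nth_index w1 (memP f w1)) h nth_index // memP. Qed.

Definition prop (r : {ffun F -> nat}) f w := (index w (P f) <= r f)%N.
Definition cbest (Q : W -> seq F) (r : {ffun F -> nat}) w :=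
  onth (Q w) (find (prop r ^~ w) (Q w)).

Lemma target_some (r : {ffun F -> nat}) f w : da_target P r f = Some w <-> r f = index w (P f).
Proof.
rewrite /da_target; split.
  move=> /onth_someP [lt eq]; by rewrite -eq index_uniq // uniqP.
by move=> ->; rewrite onth_index // memP.
Qed.

Lemma target_none (r : {ffun F -> nat}) f : da_target P r f = None <-> (#|W| <= r f)%N.
Proof.
rewrite /da_target -(sizeP f); split; first by move=> h; rewrite -onthNE h.
exact: onth_default.
Qed.

Lemma target_prop (r : {ffun F -> nat}) f w : da_target P r f = Some w -> prop r f w.
Proof. by move/target_some; rewrite /prop => ->. Qed.

Lemma cbestP Q r w f : cbest Q r w = Some f ->
  [/\ f \in Q w, prop r f w &
      forall g, g \in Q w -> prop r g w -> (index f (Q w) <= index g (Q w))%N].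
Proof.
rewrite /cbest => /onth_someP [lt eq].
have hf : f \in Q w by rewrite -eq mem_nth.
have hs : has (prop r ^~ w) (Q w) by rewrite has_find.
split => //; first by move: (nth_find f hs); rewrite eq.
move=> g gQ pg.
move: lt eq; set i := find _ _ => lt eq.
apply: (@leq_trans i); first by rewrite -{1}eq; exact: index_nth.
rewrite leqNgt; apply/negP => /(before_find f).
by rewrite nth_index // pg.
Qed.

Lemma cbestN Q r w : cbest Q r w = None -> forall g, g \in Q w -> ~~ prop r g w.
Proof.
rewrite /cbest => h g gQ; apply/negP => pg.
have : has (prop r ^~ w) (Q w) by apply/hasP; exists g.
by rewrite has_find -onthTE h.
Qed.

Lemma cbest_some Q r w g : g \in Q w -> prop r g w ->
  exists f, cbest Q r w = Some f.
Proof.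
move=> gQ pg; case h: (cbest Q r w) => [f|]; first by exists f.
by move: (cbestN h gQ); rewrite pg.
Qed.

Lemma cbest_eq Q r w f : f \in Q w -> prop r f w ->
  (forall g, g \in Q w -> prop r g w -> (index f (Q w) <= index g (Q w))%N) ->
  cbest Q r w = Some f.
Proof.
move=> fQ pf hmin; have [f' hf'] := cbest_some fQ pf.
have [f'Q pf' hm'] := cbestP hf'.
have e : index f (Q w) = index f' (Q w).
  by apply/eqP; rewrite eqn_leq hmin // hm'.
by rewrite hf' -(nth_index f fQ) e nth_index.
Qed.

Lemma cbest_mono Q (r1 r2 : {ffun F -> nat}) w f : (forall g, r1 g <= r2 g)%N ->
  cbest Q r2 w = Some f -> prop r1 f w -> cbest Q r1 w = Some f.
Proof.
move=> le h p1; have [fQ _ hm] := cbestP h.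
apply: cbest_eq => // g gQ pg; apply: hm => //.
by apply: leq_trans pg (le g).
Qed.

Definition T Q (r : {ffun F -> nat}) : {ffun F -> nat} :=
  [ffun f => if da_target P r f is Some w then
               (if cbest Q r w == Some f then r f else (r f).+1)
             else r f].

Definition Inv Q r := forall w f, cbest Q r w = Some f -> da_target P r f = Some w.

Lemma held_eq Q r w : Inv Q r -> da_held P Q r w = cbest Q r w.
Proof.
move=> inv; rewrite /da_held.
case: pickP => [f /andP [/andP [/eqP tf fQ] /forallP hall] | hn].
  case hc: (cbest Q r w) => [g|]; last first.
    by move: (cbestN hc fQ); rewrite target_prop.
  have [gQ pg hm] := cbestP hc.
  have tg := inv _ _ hc.
  have e : index f (Q w) = index g (Q w).
    apply/eqP; rewrite eqn_leq hm ?andbT ?target_prop //.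
    by move: (hall g); rewrite tg eqxx gQ.
  by rewrite -(nth_index f fQ) e nth_index.
case hc: (cbest Q r w) => [g|] //.
have [gQ pg hm] := cbestP hc.
move: (hn g); rewrite (inv _ _ hc) eqxx gQ /=.
move/negP; elim; apply/forallP => h; apply/implyP => /andP [/eqP th hQ].
by apply: hm => //; apply: target_prop th.
Qed.

Lemma step_eq Q r : Inv Q r -> da_step P Q r = T Q r.
Proof.
move=> inv; apply/ffunP => f; rewrite !ffunE.
by case: (da_target P r f) => // w; rewrite held_eq.
Qed.

Lemma T_ge Q (r : {ffun F -> nat}) f : (r f <= T Q r f)%N.
Proof. by rewrite ffunE; case: da_target => // w; case: eqP. Qed.

Lemma T_le Q (r : {ffun F -> nat}) f : (T Q r f <= (r f).+1)%N.
Proof. by rewrite ffunE; case: da_target => // w; case: eqP. Qed.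

Lemma T_mono Q (r1 r2 : {ffun F -> nat}) : (forall f, r1 f <= r2 f)%N ->
  forall f, (T Q r1 f <= T Q r2 f)%N.
Proof.
move=> le f; case: (ltngtP (r1 f) (r2 f)) => [lt|gt|eq].
- by apply: leq_trans (T_le _ _ _) (leq_trans lt (T_ge _ _ _)).
- by move: (le f); rewrite leqNgt gt.
- rewrite !ffunE /da_target eq.
  case ht: (onth (P f) (r2 f)) => [w|] //.
  case: (cbest Q r2 w =P Some f) => [h2|_]; last by case: ifP.
  have -> : cbest Q r1 w = Some f.
    apply: cbest_mono le h2 _; apply: target_prop.
    by rewrite /da_target eq.
  by rewrite eqxx.
Qed.

Lemma T_inv Q r : Inv Q r -> Inv Q (T Q r).
Proof.
move=> inv w f h.
have [fQ pf _] := cbestP h.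
case: (leqP (index w (P f)) (r f)) => old.
  have hc : cbest Q r w = Some f by apply: cbest_mono (T_ge Q r) h old.
  have tr := inv _ _ hc.
  apply/target_some; rewrite ffunE tr hc eqxx.
  by apply/target_some.
apply/target_some; apply/eqP; move: pf; rewrite /prop eqn_leq => ->; rewrite andbT.
by apply: leq_trans (T_le _ _ _) old.
Qed.

Lemma inv0 Q : Inv Q [ffun _ => 0%N].
Proof.
move=> w f h; have [_ pf _] := cbestP h.
apply/target_some; rewrite ffunE; move: pf; rewrite /prop ffunE leqn0.
by move=> /eqP ->.
Qed.

Definition lfp Q := iter (#|F| * #|W|).+1 (T Q) [ffun _ => 0%N].

Lemma iter_eq Q t : iter t (da_step P Q) [ffun _ => 0%N] = iter t (T Q) [ffun _ => 0%N]
   /\ Inv Q (iter t (T Q) [ffun _ => 0%N]).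
Proof.
elim: t => [|t [IH Ih]] /=; first by split => //; apply: inv0.
by rewrite IH step_eq //; split => //; apply: T_inv.
Qed.

Lemma lfp_inv Q : Inv Q (lfp Q).
Proof. exact: (iter_eq Q _).2. Qed.

Lemma DA_eq Q w : DA P Q w = cbest Q (lfp Q) w.
Proof.
rewrite /DA ffunE (iter_eq Q _).1 held_eq //; exact: lfp_inv.
Qed.

Lemma T_bound Q (r : {ffun F -> nat}) : (forall f, r f <= #|W|)%N -> forall f, (T Q r f <= #|W|)%N.
Proof.
move=> b f; rewrite ffunE; case ht: da_target => [w|] //.
have := ht; move/target_some => e.
case: eqP => _ //; rewrite e; exact: idx_lt.
Qed.

Lemma sum_lt Q (r : {ffun F -> nat}) : T Q r != r -> (\sum_f r f < \sum_f T Q r f)%N.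
Proof.
move=> ne.
have [f0 hf0] : exists f, r f != T Q r f.
  apply/existsP; move: ne; apply: contraR; rewrite negb_exists => /forallP h.
  by apply/eqP/ffunP => f; move: (h f); rewrite negbK => /eqP ->.
rewrite (bigD1 f0) //= [X in (_ < X)%N](bigD1 f0) //=.
have lt : (r f0 < T Q r f0)%N by rewrite ltn_neqAle hf0 T_ge.
have le : (\sum_(i | i != f0) r i <= \sum_(i | i != f0) T Q r i)%N.
  by apply: leq_sum => i _; apply: T_ge.
lia.
Qed.

Lemma iter_bound Q t : (forall f, iter t (T Q) [ffun _ => 0%N] f <= #|W|)%N.
Proof. elim: t => [|t IH] f /=; first by rewrite ffunE. exact: T_bound. Qed.

Lemma iter_fix_or Q t : let r := iter t (T Q) [ffun _ => 0%N] in
  T Q r = r \/ (t <= \sum_f r f)%N.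
Proof.
elim: t => [|t IH] /=; first by right.
case: IH => [fx|le].
  by left; rewrite fx fx.
case: (eqVneq (T Q (iter t (T Q) [ffun _ => 0%N])) (iter t (T Q) [ffun _ => 0%N])) => [fx|ne].
  by left; rewrite fx fx.
by right; apply: leq_ltn_trans le (sum_lt ne).
Qed.

Lemma lfp_fix Q : T Q (lfp Q) = lfp Q.
Proof.
case: (iter_fix_or Q (#|F| * #|W|).+1) => // le.
have : (\sum_f lfp Q f <= \sum_(f : F) #|W|)%N.
  by apply: leq_sum => f _; apply: iter_bound.
rewrite sum_nat_const => le2.
have := leq_trans le le2; rewrite cardE /= -cardE; lia.
Qed.

Lemma lfp_least Q (r : {ffun F -> nat}) : (forall f, T Q r f <= r f)%N ->
  forall f, (lfp Q f <= r f)%N.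
Proof.
move=> h; rewrite /lfp; elim: (#|F| * #|W|).+1 => [|t IH] f /=.
  by rewrite ffunE.
exact: leq_trans (T_mono Q IH f) (h f).
Qed.


Definition outc Q w := cbest Q (lfp Q) w.

Lemma fix_held Q (r : {ffun F -> nat}) f w : T Q r = r ->
  da_target P r f = Some w -> cbest Q r w = Some f.
Proof.
move=> fx ht; move/ffunP: fx => /(_ f); rewrite ffunE ht.
by case: eqP => // _ e; move: (n_Sn (r f)); rewrite e.
Qed.

Lemma outc_target Q w f : outc Q w = Some f <-> lfp Q f = index w (P f).
Proof.
split => [h|h].
  by apply/target_some; apply: lfp_inv.
by apply: fix_held (lfp_fix Q) _; apply/target_some.
Qed.

Lemma outc_inj Q w1 w2 f : outc Q w1 = Some f -> outc Q w2 = Some f -> w1 = w2.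
Proof.
move=> /outc_target h1 /outc_target h2; apply: (@idx_inj f).
by rewrite -h1 -h2.
Qed.

Lemma outc_mem Q w f : outc Q w = Some f -> f \in Q w.
Proof. by case/cbestP. Qed.

Lemma outc_unmatched Q f : (forall w, outc Q w <> Some f) -> (#|W| <= lfp Q f)%N.
Proof.
move=> h; apply/target_none.
case ht: (da_target P (lfp Q) f) => [w|] //.
by case: (h w); apply: fix_held (lfp_fix Q) ht.
Qed.

Lemma outc_prop Q w f : f \in Q w -> prop (lfp Q) f w ->
  exists2 y, outc Q w = Some y & (index y (Q w) <= index f (Q w))%N.
Proof.
move=> fQ pf; have [y hy] := cbest_some fQ pf.
exists y => //; have [_ _ hm] := cbestP hy; exact: hm.
Qed.

Lemma outc_idx_eq Q w y f : outc Q w = Some y -> f \in Q w ->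
  index y (Q w) = index f (Q w) -> y = f.
Proof.
move=> hy fQ e; have yQ := outc_mem hy.
by rewrite -(nth_index y yQ) e nth_index.
Qed.

(* firm f prefers w to its outcome partner (or is unmatched) -> f has proposed to w *)
Lemma outc_block Q w f :
  (forall x, outc Q x = Some f -> (index w (P f) < index x (P f))%N) ->
  prop (lfp Q) f w.
Proof.
move=> h; rewrite /prop.
case ht: (da_target P (lfp Q) f) => [x|].
  have hx : outc Q x = Some f by apply: fix_held (lfp_fix Q) ht.
  move/target_some: ht => ->; exact: ltnW (h _ hx).
by move/target_none: ht; apply: leq_trans; apply: ltnW; apply: idx_lt.
Qed.

Lemma lfp_le Q Q' : (forall w, cbest Q' (lfp Q) w = cbest Q (lfp Q) w) ->
  forall f, (lfp Q' f <= lfp Q f)%N.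
Proof.
move=> h; apply: lfp_least => f.
have -> : T Q' (lfp Q) = T Q (lfp Q).
  by apply/ffunP => g; rewrite !ffunE; case: da_target => // w; rewrite h.
by rewrite lfp_fix.
Qed.

Lemma no_early Q (k : nat) (fo_ : nat -> F) (wo_ : nat -> W) j :
  (forall p, (p < j)%N -> fo_ p <> fo_ j) ->
  (forall w', (index w' (P (fo_ j)) < index (wo_ j) (P (fo_ j)))%N ->
      exists2 p, (p < j)%N & w' = wo_ p) ->
  (forall p, (p < j)%N -> outc Q (wo_ p) = Some (fo_ p)) ->
  (index (wo_ j) (P (fo_ j)) <= lfp Q (fo_ j))%N.
Proof.
move=> Hf HPf IH; rewrite leqNgt; apply/negP => lt.
set t := lfp Q (fo_ j) in lt.
have tW : (t < size (P (fo_ j)))%N by rewrite sizeP; apply: ltn_trans lt (idx_lt _ _).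
set w' := nth (wo_ j) (P (fo_ j)) t.
have iw : index w' (P (fo_ j)) = t by rewrite index_uniq // uniqP.
have [p pj ew] : exists2 p, (p < j)%N & w' = wo_ p by apply: HPf; rewrite iw.
have h1 : outc Q w' = Some (fo_ j) by apply/outc_target; rewrite iw.
by apply: (Hf p pj); move: (IH p pj); rewrite -ew h1 => -[].
Qed.

Lemma block Q (k : nat) (fo_ : nat -> F) (wo_ : nat -> W) :
  (forall p j, (p < j)%N -> (j < k)%N -> fo_ p <> fo_ j) ->
  (forall p j, (p < j)%N -> (j < k)%N -> wo_ p <> wo_ j) ->
  (forall j w', (j < k)%N -> (index w' (P (fo_ j)) < index (wo_ j) (P (fo_ j)))%N ->
      exists2 p, (p < j)%N & w' = wo_ p) ->
  (forall j, (j < k)%N -> (lfp Q (fo_ j) <= index (wo_ j) (P (fo_ j)))%N \/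
     (fo_ j \in Q (wo_ j) /\ forall y, y \in Q (wo_ j) ->
        (index y (Q (wo_ j)) < index (fo_ j) (Q (wo_ j)))%N -> exists2 p, (p < j)%N & y = fo_ p)) ->
  forall j, (j < k)%N -> outc Q (wo_ j) = Some (fo_ j).
Proof.
move=> Hf Hw HPf H j; elim/ltn_ind: j => j IH jk.
have IH' : forall p, (p < j)%N -> outc Q (wo_ p) = Some (fo_ p).
  by move=> p pj; apply: IH => //; apply: ltn_trans pj jk.
have ge := no_early k (fun p pj => Hf p j pj jk) (HPf j ^~ jk) IH'.
case: (H j jk) => [le|[fQ hy]].
  by apply/outc_target; apply/eqP; rewrite eqn_leq le ge.
have [y hy1 hy2] := outc_prop fQ ge.
rewrite hy1; case: (ltngtP (index y (Q (wo_ j))) (index (fo_ j) (Q (wo_ j)))) => [lt|gt|eq].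
- have [p pj ey] := hy y (outc_mem hy1) lt.
  have := IH' p pj; rewrite -ey => h.
  by case: (Hw p j pj jk); apply: outc_inj h hy1.
- by move: hy2; rewrite leqNgt gt.
- by rewrite (outc_idx_eq hy1 fQ eq).
Qed.

(* Serial dictatorship when all firms share the same list *)
Section SD.
Variable pi : seq W.
Hypothesis Hpi : forall f, P f = pi.

Lemma SD_avail Q w f : f \in Q w ->
  (forall w', (index w' pi < index w pi)%N -> outc Q w' <> Some f) ->
  exists2 y, outc Q w = Some y & (index y (Q w) <= index f (Q w))%N.
Proof.
move=> fQ h; apply: outc_prop fQ _; rewrite /prop Hpi leqNgt; apply/negP => lt.
set t := lfp Q f in lt.
have tW : (t < size pi)%N.
  rewrite -(Hpi f) sizeP; apply: ltn_trans lt _; rewrite -(Hpi f); exact: idx_lt.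
set w' := nth w pi t.
have iw : index w' pi = t by rewrite index_uniq // -(Hpi f); exact: uniqP.
apply: (h w'); first by rewrite iw.
by apply/outc_target; rewrite Hpi iw.
Qed.

Lemma SD_one Q Q' w y : Q w = Q' w ->
  (forall w', (index w' pi < index w pi)%N -> outc Q w' = outc Q' w') ->
  outc Q w = Some y -> exists2 y', outc Q' w = Some y' & (index y' (Q w) <= index y (Q w))%N.
Proof.
move=> eQ hlow hy.
have yQ : y \in Q' w by rewrite -eQ; apply: outc_mem hy.
have hav : forall w', (index w' pi < index w pi)%N -> outc Q' w' <> Some y.
  move=> w' lt e; have := hlow w' lt; rewrite e => e2.
  by move: lt; rewrite (outc_inj e2 hy) ltnn.
have [y' h1 h2] := SD_avail yQ hav.
by exists y' => //; rewrite eQ.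
Qed.

Lemma SD_det Q Q' w : Q w = Q' w ->
  (forall w', (index w' pi < index w pi)%N -> outc Q w' = outc Q' w') ->
  outc Q w = outc Q' w.
Proof.
move=> eQ hlow.
case h: (outc Q w) => [y|].
  have [y' h1 h2] := SD_one eQ hlow h.
  have hlow' : forall w', (index w' pi < index w pi)%N -> outc Q' w' = outc Q w'.
    by move=> w' lt; rewrite hlow.
  have [y'' h3 h4] := SD_one (esym eQ) hlow' h1.
  rewrite h3 in h; case: h => ey; subst y''.
  rewrite -eQ in h4.
  have e : index y' (Q w) = index y (Q w) by apply/eqP; rewrite eqn_leq h2 h4.
  by rewrite h1 (outc_idx_eq h3 _ (esym e)) // eQ; apply: outc_mem h1.
case h': (outc Q' w) => [y'|] //.
have hlow' : forall w', (index w' pi < index w pi)%N -> outc Q' w' = outc Q w'.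
  by move=> w' lt; rewrite hlow.
have [y'' h3 _] := SD_one (esym eQ) hlow' h'.
by rewrite h3 in h.
Qed.

Lemma SD_dep Q Q' k : (forall w', (index w' pi < k)%N -> Q w' = Q' w') ->
  forall w', (index w' pi < k)%N -> outc Q w' = outc Q' w'.
Proof.
move=> hQ.
suff H : forall n w', index w' pi = n -> (n < k)%N -> outc Q w' = outc Q' w'.
  by move=> w' lt; apply: H (erefl _) lt.
elim/ltn_ind => n IH w' e lt.
apply: SD_det; first by apply: hQ; rewrite e.
move=> w'' lt2; apply: (IH (index w'' pi)) => //; first by rewrite -e.
by apply: ltn_trans lt; rewrite -e.
Qed.

End SD.


End DAT.

Lemma index_filter_le (T : eqType) (a : pred T) (s : seq T) x y : a x -> a y ->
  (index x s <= index y s)%N -> (index x [seq z <- s | a z] <= index y [seq z <- s | a z])%N.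
Proof.
move=> ax ay; elim: s => [|z s IH] //=.
case: (eqVneq z x) => [e|zx]; first by subst z; rewrite /= ax /= eqxx.
case: (eqVneq z y) => [e|zy]; first by subst z; rewrite ltn0.
rewrite ltnS => le.
by case: (a z) => /=; rewrite ?(negbTE zx) ?(negbTE zy) ?ltnS; apply: IH.
Qed.

Section Dev.
Variables (F W : finType) (P : F -> seq W).
Hypothesis HP : forall f, perm_eq (P f) (enum W).
Variables (Q : W -> seq F) (w : W) (g : F) (X : pred F).
Hypothesis Xg : X g.
Let A := [seq x <- Q w | X x && (x != g)].
Let C := [seq x <- Q w | ~~ X x].
Variable Q' : W -> seq F.
Hypothesis hQ'w : Q' w = A ++ g :: C.
Hypothesis hQ'o : forall w', w' != w -> Q' w' = Q w'.

Lemma dev_other r w' : w' != w -> cbest P Q' r w' = cbest P Q r w'.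
Proof. by move=> ne; rewrite /cbest hQ'o. Qed.

Lemma gA : g \notin A.
Proof. by rewrite mem_filter eqxx andbF. Qed.

Lemma idx_L_small x : x \in Q' w -> X x -> (index x (Q' w) <= size A)%N.
Proof.
rewrite hQ'w index_cat mem_cat => /orP [xA|xgC] Xx.
  by rewrite xA; apply: ltnW; rewrite index_mem.
case: ifP => [xA|_]; first by apply: ltnW; rewrite index_mem.
move: xgC; rewrite inE => /orP [/eqP ->|xC]; first by rewrite /= eqxx addn0.
by move: xC; rewrite mem_filter Xx.
Qed.

Lemma idx_L_smallX y : y \in Q' w -> (index y (Q' w) <= size A)%N -> X y.
Proof.
rewrite hQ'w index_cat mem_cat => /orP [yA|ygC].
  by move: yA; rewrite mem_filter => /andP [/andP []].
case: ifP => [yA|_]; first by move: yA; rewrite mem_filter => /andP [/andP []].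
rewrite /= ; case: eqP => [<- _|_]; [exact: Xg | lia].
Qed.

Lemma dev_notX r : (forall z, cbest P Q' r w = Some z -> ~~ X z) ->
  forall x, x \in Q' w -> X x -> ~~ prop P r x w.
Proof.
move=> h x xL Xx; apply/negP => px.
have [y hy] := cbest_some xL px.
have [yL _ hm] := cbestP hy.
have := idx_L_smallX yL (leq_trans (hm x xL px) (idx_L_small xL Xx)).
by move: (h y hy) => /negbTE ->.
Qed.

Lemma gL : g \in Q' w.
Proof. by rewrite hQ'w mem_cat in_cons eqxx orbT. Qed.

Lemma memQL x : x \in Q w -> X x -> x \in Q' w.
Proof.
move=> xQ Xx; case: (eqVneq x g) => [->|ne]; first exact: gL.
by rewrite hQ'w mem_cat mem_filter Xx ne xQ.
Qed.

Lemma onth_find_filter (T : eqType) (a q : pred T) (s : seq T) :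
  (forall x, x \in s -> a x -> q x) ->
  onth s (find a s) = onth [seq x <- s | q x] (find a [seq x <- s | q x]).
Proof.
elim: s => [|x s IH] //= h.
case ax: (a x).
  by rewrite (h x (mem_head _ _) ax) /= ax.
have IH' : onth s (find a s) = onth [seq x <- s | q x] (find a [seq x <- s | q x]).
  by apply: IH => y ys ay; apply: h => //; rewrite in_cons ys orbT.
by case: (q x) => /=; rewrite ?ax /= IH'.
Qed.

Lemma dev_agree r : (forall x, x \in Q' w -> X x -> ~~ prop P r x w) ->
  cbest P Q' r w = cbest P Q r w.
Proof.
move=> h; rewrite /cbest hQ'w find_cat.
have nA : ~~ has (prop P r ^~ w) A.
  apply/hasPn => x xA; apply: h.
    by rewrite hQ'w mem_cat xA.
  by move: xA; rewrite mem_filter => /andP [/andP []].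
rewrite (negbTE nA) onth_cat ltnNge leq_addr /= addKn /=.
rewrite (negbTE (h g gL Xg)) /=.
rewrite [RHS](@onth_find_filter _ _ (fun x => ~~ X x)) //.
move=> x xQ px; apply/negP => Xx.
by move: (h x (memQL xQ Xx) Xx); rewrite px.
Qed.

Lemma cbest_other_eq r w' : w' != w -> cbest P Q r w' = cbest P Q' r w'.
Proof. by move=> ne; rewrite dev_other. Qed.

Lemma dev_caseB : (forall z, outc P Q' w = Some z -> ~~ X z) ->
  outc P Q' w = outc P Q w /\ ~~ prop P (lfp P Q) g w.
Proof.
move=> h.
have nX := dev_notX h.
have ag' := dev_agree nX.
have le1 : forall f, (lfp P Q f <= lfp P Q' f)%N.
  apply: lfp_le => // w'; case: (eqVneq w' w) => [->|ne].
    by rewrite ag'.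
  by rewrite cbest_other_eq.
have nX2 : forall x, x \in Q' w -> X x -> ~~ prop P (lfp P Q) x w.
  move=> x xL Xx; apply: contra (nX x xL Xx); rewrite /prop => p.
  exact: leq_trans p (le1 x).
have ag := dev_agree nX2.
have le2 : forall f, (lfp P Q' f <= lfp P Q f)%N.
  apply: lfp_le => // w'; case: (eqVneq w' w) => [->|ne] //.
  by rewrite dev_other.
have e : lfp P Q' = lfp P Q.
  by apply/ffunP => f; apply/eqP; rewrite eqn_leq le1 le2.
split; last exact: nX2 g gL Xg.
by rewrite /outc e ag.
Qed.

Lemma dev_caseA h : outc P Q w = Some h -> X h -> h != g ->
  forall f, (lfp P Q' f <= lfp P Q f)%N.
Proof.
move=> hh Xh hg.
have [hQ ph hm] := cbestP hh.
have hA : h \in A by rewrite mem_filter Xh hg hQ.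
apply: lfp_le => // w'; case: (eqVneq w' w) => [->|ne]; last by rewrite dev_other.
rewrite [RHS]hh; apply: cbest_eq => //.
  by rewrite hQ'w mem_cat hA.
move=> y yL py; rewrite hQ'w !index_cat hA.
case: ifP => [yA|nyA].
  apply: index_filter_le.
  - by rewrite Xh hg.
  - by move: yA; rewrite mem_filter => /andP [].
  apply: hm => //; by move: yA; rewrite mem_filter => /andP [].
apply: leq_trans (leq_addr _ _); apply: ltnW; by rewrite index_mem.
Qed.

End Dev.

From Stdlib Require Import FunctionalExtensionality.

Lemma onth_lt (T : Type) (s : seq T) x0 i : (i < size s)%N -> onth s i = Some (nth x0 s i).
Proof. by move=> lt; rewrite onthE (nth_map x0). Qed.

Lemma notdrop_idx (T : eqType) (s : seq T) j x : x \in s -> x \notin drop j s -> (index x s < j)%N.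
Proof.
move=> xs nd; move: xs; rewrite -{1}(cat_take_drop j s) mem_cat (negbTE nd) orbF => xt.
rewrite -(cat_take_drop j s) index_cat xt.
have := index_mem x (take j s); rewrite xt => lt.
apply: leq_trans lt _; by rewrite size_take; case: ltnP.
Qed.

Section Sort.
Variables (R : realFieldType) (T : finType) (k : T -> R).
Hypothesis hk : injective k.
Definition srt := sort (fun x y => k y <= k x) (enum T).

Lemma srt_perm : perm_eq srt (enum T).
Proof. by rewrite /srt perm_sort. Qed.

Lemma srt_mem x : x \in srt.
Proof. by rewrite (perm_mem srt_perm) mem_enum. Qed.

Lemma srt_uniq : uniq srt.
Proof. by rewrite (perm_uniq srt_perm) enum_uniq. Qed.

Lemma srt_lt x y : (index x srt < index y srt)%N = (k y < k x).
Proof.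
have tr : transitive (fun x y => k y <= k x).
  by move=> a b c h1 h2; exact: le_trans h2 h1.
have tot : total (fun x y => k y <= k x) by move=> a b; rewrite orbC le_total.
have so : sorted (fun x y => k y <= k x) srt by apply: sort_sorted.
apply/idP/idP => [lt|lt].
  have := sorted_ltn_index tr so x y (srt_mem x) (srt_mem y) lt.
  rewrite le_eqVlt => /orP [/eqP e|//].
  by move: lt; rewrite (hk e) ltnn.
case: (ltngtP (index x srt) (index y srt)) => // [gt|eq].
  have := sorted_ltn_index tr so y x (srt_mem y) (srt_mem x) gt.
  by rewrite leNgt lt.
have exy : x = y by rewrite -(nth_index x (srt_mem x)) eq nth_index // srt_mem.
by move: lt; rewrite exy ltxx.
Qed.

Lemma srt_le x y : (index x srt <= index y srt)%N = (k y <= k x).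
Proof. by rewrite leqNgt srt_lt -leNgt. Qed.

End Sort.

Lemma dev_dev (F W : finType) (s : profile F W) w l l' : deviate (deviate s w l) w l' = deviate s w l'.
Proof.
by apply: functional_extensionality => w'; rewrite /deviate; case: eqP.
Qed.

Lemma dev_self (F W : finType) (s : profile F W) w : deviate s w (s w) = s.
Proof.
by apply: functional_extensionality => w'; rewrite /deviate; case: eqP => // ->.
Qed.

Section Econ.
Variables (R : realFieldType) (F W Th : finType).
Variables (uf : Th -> F -> W -> R) (uw : F -> W -> R) (Psi : Th -> R).
Hypothesis HPsi : forall th, 0 < Psi th.
Hypothesis Hpf : forall th f w, 0 < uf th f w.
Hypothesis Hpw : forall f w, 0 < uw f w.
Hypothesis Hif : forall th f, injective (uf th f).
Hypothesis Hiw : forall w, injective (uw ^~ w).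

Definition Pth th := firm_list uf th.
Lemma HPth th f : perm_eq (Pth th f) (enum W).
Proof. exact: (@srt_perm R W (uf th f)). Qed.
Arguments HPth : clear implicits.

Definition tl w : seq F := srt (uw ^~ w).
Definition sT : profile F W := fun w => tl w.

Lemma outcomeE s th w : outcome uf s th w = outc (Pth th) s w.
Proof. exact: (DA_eq (HPth th)). Qed.

Lemma pidx_lt th f w1 w2 :
  (index w1 (Pth th f) < index w2 (Pth th f))%N = (uf th f w2 < uf th f w1).
Proof. have := @srt_lt R W (uf th f) (@Hif th f) w1 w2. rewrite /srt. move=> ->. by []. Qed.

Lemma tidx_lt w f1 f2 : (index f1 (tl w) < index f2 (tl w))%N = (uw f2 w < uw f1 w).
Proof. exact: (@srt_lt R F (uw ^~ w) (@Hiw w)). Qed.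

Lemma tidx_le w f1 f2 : (index f1 (tl w) <= index f2 (tl w))%N = (uw f2 w <= uw f1 w).
Proof. exact: (@srt_le R F (uw ^~ w) (@Hiw w)). Qed.

Lemma tl_mem w f : f \in tl w.
Proof. exact: srt_mem. Qed.

Lemma tl_uniq w : uniq (tl w).
Proof. exact: srt_uniq. Qed.

Lemma wu_ge0 (mu : matching F W) w : 0 <= worker_util uw mu w.
Proof. by rewrite /worker_util; case: (mu w) => // f; apply: ltW. Qed.

Lemma wu_inj (mu mu' : matching F W) w :
  worker_util uw mu w = worker_util uw mu' w -> mu w = mu' w.
Proof.
rewrite /worker_util; case: (mu w) => [f|]; case: (mu' w) => [f'|] //.
- by move=> e; rewrite (Hiw e).
- by move=> e; move: (Hpw f w); rewrite e ltxx.
- by move=> e; move: (Hpw f' w); rewrite -e ltxx.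
Qed.

Lemma exp_le s s' w :
  (forall th, worker_util uw (outcome uf s th) w <= worker_util uw (outcome uf s' th) w) ->
  exp_util uf uw Psi s w <= exp_util uf uw Psi s' w.
Proof.
move=> h; apply: ler_sum => th _; apply: ler_wpM2l; [exact: ltW | exact: h].
Qed.

Lemma exp_lt s s' w th0 :
  (forall th, worker_util uw (outcome uf s th) w <= worker_util uw (outcome uf s' th) w) ->
  worker_util uw (outcome uf s th0) w < worker_util uw (outcome uf s' th0) w ->
  exp_util uf uw Psi s w < exp_util uf uw Psi s' w.
Proof.
move=> h h0; rewrite /exp_util (bigD1 th0) //= [X in _ < X](bigD1 th0) //=.
apply: ltr_leD; first by rewrite ltr_pM2l.
apply: ler_sum => th _; apply: ler_wpM2l; [exact: ltW | exact: h].
Qed.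

Lemma sT_stable th : stable (uf th) uw (outcome uf sT th).
Proof.
split.
- move=> w1 w2 f; rewrite !outcomeE => h1 h2; exact: (outc_inj (HPth th) h1 h2).
- by move=> w f _; split; apply: ltW.
move=> f w [hw hf].
have pf : prop (Pth th) (lfp (Pth th) sT) f w.
  apply: (outc_block (HPth th)) => x hx; rewrite pidx_lt.
  move: hf; rewrite /firm_util; case: pickP => [x' /eqP hx'|hn].
    by rewrite outcomeE in hx'; rewrite (outc_inj (HPth th) hx' hx).
  by move: (hn x); rewrite outcomeE hx eqxx.
have [y hy hi] := outc_prop (tl_mem w f) pf.
move: hw; rewrite /worker_util outcomeE hy.
by rewrite tidx_le in hi; rewrite ltNge hi.
Qed.

Lemma stable_of s th : (forall w, outc (Pth th) s w = outc (Pth th) sT w) ->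
  stable (uf th) uw (outcome uf s th).
Proof.
move=> h; have -> : outcome uf s th = outcome uf sT th.
  by apply/ffunP => w; rewrite !outcomeE.
exact: sT_stable.
Qed.



Lemma common_pi (Hc : common_firm_ranking uf) th f0 : forall f, Pth th f = Pth th f0.
Proof.
move=> f; rewrite /Pth /firm_list.
have -> : (fun w1 w2 => uf th f w2 <= uf th f w1) = (fun w1 w2 => uf th f0 w2 <= uf th f0 w1).
  apply: functional_extensionality => w1; apply: functional_extensionality => w2.
  case: (eqVneq w1 w2) => [->|ne]; first by rewrite !lexx.
  have ne' : (w2 == w1) = false by rewrite eq_sym (negbTE ne).
  rewrite !le_eqVlt !(inj_eq (@Hif th _)) ne' /=.
  by apply/idP/idP => h; [exact: (Hc th f f0 w2 w1).1 h | exact: (Hc th f f0 w2 w1).2 h].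
by [].
Qed.

Lemma weak1 (Hc : common_firm_ranking uf) s w th :
  worker_util uw (outcome uf s th) w <= worker_util uw (outcome uf (deviate s w (tl w)) th) w.
Proof.
rewrite /worker_util !outcomeE.
case hs: (outc (Pth th) s w) => [z|]; last first.
  by case: outc => // f; apply: ltW.
set Qd := deviate s w (tl w).
have Hpi := common_pi Hc th z.
have hQ : forall w', (index w' (Pth th z) < index w (Pth th z))%N -> s w' = Qd w'.
  move=> w' lt; rewrite /Qd /deviate; case: eqP => // e; by move: lt; rewrite e ltnn.
have low : forall w', (index w' (Pth th z) < index w (Pth th z))%N ->
    outc (Pth th) s w' = outc (Pth th) Qd w'.
  by move=> w' lt; apply: (SD_dep (HPth th) Hpi hQ lt).
have hav : forall w', (index w' (Pth th z) < index w (Pth th z))%N -> outc (Pth th) Qd w' <> Some z.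
  move=> w' lt e; rewrite -(low w' lt) in e.
  by move: lt; rewrite (outc_inj (HPth th) e hs) ltnn.
have zQ : z \in Qd w by rewrite /Qd /deviate eqxx tl_mem.
have [y hy hi] := SD_avail (HPth th) Hpi zQ hav.
by rewrite hy; move: hi; rewrite /Qd /deviate eqxx tidx_le.
Qed.

Lemma BNE_sT1 (Hc : common_firm_ranking uf) : BNE uf uw Psi sT.
Proof.
split; first by move=> w; exact: tl_uniq.
move=> w l _; apply: exp_le => th.
have e : deviate sT w (tl w) = sT := dev_self sT w.
by have := weak1 Hc (deviate sT w l) w th; rewrite dev_dev e.
Qed.

Lemma uniq1 (Hc : common_firm_ranking uf) s : BNE uf uw Psi s ->
  forall th, stable (uf th) uw (outcome uf s th).
Proof.
move=> [Hu Hb] th; apply: stable_of => w.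
case: (pickP (@predT F)) => [f0 _|hF]; last first.
  case: outc => [f|]; first by move: (hF f).
  by case: outc => [f|] //; move: (hF f).
set pi := Pth th f0; have Hpi := common_pi Hc th f0.
suff H : forall n w, index w pi = n -> outc (Pth th) s w = outc (Pth th) sT w.
  by apply: H (erefl _).
elim/ltn_ind => n IH {}w e.
case: (eqVneq (outc (Pth th) s w) (outc (Pth th) sT w)) => // ne.
exfalso.
set Qd := deviate s w (tl w).
have low1 : forall w', (index w' pi < index w pi)%N ->
    outc (Pth th) Qd w' = outc (Pth th) sT w'.
  move=> w' lt.
  have hQ : forall w'', (index w'' pi < index w pi)%N -> Qd w'' = s w''.
    move=> w'' lt2; rewrite /Qd /deviate; case: eqP => // e2; by move: lt2; rewrite e2 ltnn.
  rewrite (SD_dep (HPth th) Hpi hQ lt).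
  by apply: (IH (index w' pi)) => //; rewrite -e.
have e1 : outc (Pth th) Qd w = outc (Pth th) sT w.
  apply: (SD_det (HPth th) Hpi) => //.
  by rewrite /Qd /deviate eqxx.
have strict : worker_util uw (outcome uf s th) w < worker_util uw (outcome uf Qd th) w.
  rewrite lt_neqAle weak1 // andbT; apply/negP => /eqP h.
  by move: (wu_inj h); rewrite !outcomeE e1 => h'; rewrite h' eqxx in ne.
have := Hb w (tl w) (tl_uniq w).
rewrite leNgt => /negP; apply.
by apply: (exp_lt _ strict) => th'; exact: weak1.
Qed.



Section SPCs.
Variables (th : Th) (fo : seq F) (wo : seq W) (f0 : F) (w0 : W).
Hypothesis Hspc : SPC_orderings (uf th) uw fo wo.

Local Notation m := (minn #|F| #|W|).
Definition fo_ j := nth f0 fo j.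
Definition wo_ j := nth w0 wo j.

Lemma fo_size : size fo = #|F|.
Proof. by case: Hspc => h _ _; rewrite (perm_size h) -cardE. Qed.
Lemma wo_size : size wo = #|W|.
Proof. by case: Hspc => _ h _; rewrite (perm_size h) -cardE. Qed.
Lemma fo_uniq : uniq fo.
Proof. by case: Hspc => h _ _; rewrite (perm_uniq h) enum_uniq. Qed.
Lemma wo_uniq : uniq wo.
Proof. by case: Hspc => _ h _; rewrite (perm_uniq h) enum_uniq. Qed.
Lemma fo_mem f : f \in fo.
Proof. by case: Hspc => h _ _; rewrite (perm_mem h) mem_enum. Qed.
Lemma wo_mem w : w \in wo.
Proof. by case: Hspc => _ h _; rewrite (perm_mem h) mem_enum. Qed.

Lemma m_F j : (j < m)%N -> (j < size fo)%N.
Proof. rewrite fo_size => h; apply: leq_trans h _; exact: geq_minl. Qed.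
Lemma m_W j : (j < m)%N -> (j < size wo)%N.
Proof. rewrite wo_size => h; apply: leq_trans h _; exact: geq_minr. Qed.

Lemma HfS p j : (p < j)%N -> (j < m)%N -> fo_ p <> fo_ j.
Proof.
move=> pj jm /eqP; rewrite /fo_ nth_uniq ?fo_uniq ?m_F //; last exact: ltn_trans pj jm.
by move/eqP => e; move: pj; rewrite e ltnn.
Qed.

Lemma HwS p j : (p < j)%N -> (j < m)%N -> wo_ p <> wo_ j.
Proof.
move=> pj jm /eqP; rewrite /wo_ nth_uniq ?wo_uniq ?m_W //; last exact: ltn_trans pj jm.
by move/eqP => e; move: pj; rewrite e ltnn.
Qed.

Lemma wo_idx j : (j < m)%N -> index (wo_ j) wo = j.
Proof. by move=> jm; rewrite /wo_ index_uniq ?wo_uniq ?m_W. Qed.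

Lemma topS j : (j < m)%N -> top_top (uf th) uw (drop j fo) (drop j wo) (fo_ j) (wo_ j).
Proof.
move=> jm; case: Hspc => _ _ h; apply: h => //.
  by rewrite /fo_ -onth_lt // m_F.
by rewrite /wo_ -onth_lt // m_W.
Qed.

Lemma HPfS j w' : (j < m)%N ->
  (index w' (Pth th (fo_ j)) < index (wo_ j) (Pth th (fo_ j)))%N ->
  exists2 p, (p < j)%N & w' = wo_ p.
Proof.
move=> jm; rewrite pidx_lt => lt.
have [h1 _] := topS jm.
exists (index w' wo); last by rewrite /wo_ nth_index // wo_mem.
apply: notdrop_idx (wo_mem w') _; apply/negP => hd.
by have := h1 w' hd; rewrite leNgt lt.
Qed.

Lemma WkS j y : (j < m)%N -> uw (fo_ j) (wo_ j) < uw y (wo_ j) ->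
  exists2 p, (p < j)%N & y = fo_ p.
Proof.
move=> jm lt.
have [_ h2] := topS jm.
exists (index y fo); last by rewrite /fo_ nth_index // fo_mem.
apply: notdrop_idx (fo_mem y) _; apply/negP => hd.
by have := h2 y hd; rewrite leNgt lt.
Qed.

Lemma spc_block Q K : (K <= m)%N ->
  (forall j, (j < K)%N -> (lfp (Pth th) Q (fo_ j) <= index (wo_ j) (Pth th (fo_ j)))%N \/
     (fo_ j \in Q (wo_ j) /\ forall y, y \in Q (wo_ j) ->
        (index y (Q (wo_ j)) < index (fo_ j) (Q (wo_ j)))%N -> exists2 p, (p < j)%N & y = fo_ p)) ->
  forall j, (j < K)%N -> outc (Pth th) Q (wo_ j) = Some (fo_ j).
Proof.
move=> Km H; apply: (block (HPth th)) => //.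
- by move=> p j pj jK; apply: HfS pj (leq_trans jK Km).
- by move=> p j pj jK; apply: HwS pj (leq_trans jK Km).
- by move=> j w' jK; apply: HPfS (leq_trans jK Km).
Qed.

Lemma truthful_cond (Q : profile F W) j : (j < m)%N -> Q (wo_ j) = tl (wo_ j) ->
  (fo_ j \in Q (wo_ j) /\ forall y, y \in Q (wo_ j) ->
     (index y (Q (wo_ j)) < index (fo_ j) (Q (wo_ j)))%N -> exists2 p, (p < j)%N & y = fo_ p).
Proof.
move=> jm ->; split; first exact: tl_mem.
by move=> y _; rewrite tidx_lt => lt; apply: WkS.
Qed.

Lemma sT_spc j : (j < m)%N -> outc (Pth th) sT (wo_ j) = Some (fo_ j).
Proof.
move=> jm; apply: (spc_block (leqnn m)) => // j' j'm.
by right; apply: truthful_cond.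
Qed.

Lemma idx_m_F w : (m <= index w wo)%N -> m = #|F|.
Proof.
have : (index w wo < #|W|)%N by rewrite -wo_size index_mem wo_mem.
move=> h1 h2; apply/eqP; rewrite eqn_leq geq_minl /=.
move: h1 h2; rewrite /minn; case: ifP => //; lia.
Qed.

Lemma spc_det Q : (forall j, (j < m)%N -> outc (Pth th) Q (wo_ j) = Some (fo_ j)) ->
  forall w, outc (Pth th) Q w = if (index w wo < m)%N then Some (fo_ (index w wo)) else None.
Proof.
move=> h w; case: ifP => lt.
  by rewrite -(h _ lt) /wo_ nth_index // wo_mem.
case ho: (outc (Pth th) Q w) => [z|] //.
have hm : (m <= index w wo)%N by rewrite leqNgt lt.
have hm2 : minn #|F| #|W| = #|F| := idx_m_F hm.
have pm : (index z fo < m)%N by rewrite hm2 -fo_size index_mem fo_mem.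
have := h _ pm; rewrite /fo_ nth_index ?fo_mem // => hp.
have ew := outc_inj (HPth th) hp ho.
by move: lt; rewrite -ew -/(wo_ _) wo_idx // pm.
Qed.

End SPCs.

Lemma weak2 th fo wo (Hspc : SPC_orderings (uf th) uw fo wo) w l :
  worker_util uw (outcome uf (deviate sT w l) th) w <= worker_util uw (outcome uf sT th) w.
Proof.
rewrite /worker_util !outcomeE.
set Qd := deviate sT w l.
case hd: (outc (Pth th) Qd w) => [z|]; last by case: outc => // f; apply: ltW.
set k := index w wo.
set m := minn #|F| #|W|.
have lowK : forall j, (j < minn k m)%N -> outc (Pth th) Qd (wo_ wo w j) = Some (fo_ fo z j).
  apply: (spc_block Hspc (geq_minr k m)) => j hj; right.
  have jm : (j < m)%N by apply: leq_trans hj (geq_minr _ _).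
  apply: (@truthful_cond th fo wo z w Hspc) => //.
  rewrite /Qd /deviate; case: eqP => // e; exfalso.
  have : (j < k)%N by apply: leq_trans hj (geq_minl _ _).
  by rewrite /k -e (@wo_idx th fo wo w Hspc _ jm) ltnn.
have zfree : forall p, (p < minn k m)%N -> z <> fo_ fo z p.
  move=> p hp e; have := lowK p hp; rewrite -e => h.
  have ew := outc_inj (HPth th) h hd.
  have pm : (p < m)%N by apply: leq_trans hp (geq_minr _ _).
  have : (p < k)%N by apply: leq_trans hp (geq_minl _ _).
  by rewrite /k -ew (@wo_idx th fo wo w Hspc _ pm) ltnn.
case: (ltnP k m) => km.
  have hmk : minn k m = k by apply/minn_idPl; apply: ltnW.
  have zk : (k <= index z fo)%N.
    rewrite leqNgt; apply/negP => lt; apply: (zfree (index z fo)); first by rewrite hmk.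
    by rewrite /fo_ nth_index // (fo_mem Hspc).
  have zd : z \in drop k fo.
    apply/negPn/negP => nd; have := notdrop_idx (fo_mem Hspc z) nd; by rewrite ltnNge zk.
  have [_ h2] := @topS th fo wo z w Hspc _ km.
  have ewk : wo_ wo w k = w by rewrite /wo_ /k nth_index // (wo_mem Hspc).
  have := @sT_spc th fo wo z w Hspc _ km; rewrite ewk => ->.
  by have := h2 z zd; rewrite ewk.
have hm2 : m = #|F| := idx_m_F Hspc km.
have hmk : minn k m = m by apply/minn_idPr.
exfalso; apply: (zfree (index z fo)).
  by rewrite hmk hm2 -(fo_size Hspc) index_mem (fo_mem Hspc).
by rewrite /fo_ nth_index // (fo_mem Hspc).
Qed.

Lemma BNE_sT2 (HS : forall th, SPC (uf th) uw) : BNE uf uw Psi sT.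
Proof.
split; first by move=> w; exact: tl_uniq.
move=> w l _; apply: exp_le => th.
have [fo [wo Hspc]] := HS th.
exact: weak2 Hspc w l.
Qed.



Lemma step2 (fo : Th -> seq F) (wo : Th -> seq W)
  (Hspc : forall th, SPC_orderings (uf th) uw (fo th) (wo th))
  (Hst : forall th i fi wi f, (i < minn #|F| #|W|)%N ->
       onth (fo th) i = Some fi -> onth (wo th) i = Some wi -> uw fi wi < uw f wi ->
       forall th', exists2 i', (i' < i)%N & onth (fo th') i' = Some f)
  (s : profile F W) (Hu : forall w, uniq (s w))
  (Hb : forall w l, uniq l -> exp_util uf uw Psi (deviate s w l) w <= exp_util uf uw Psi s w)
  (f0 : F) (w0 : W) i (him : (i < minn #|F| #|W|)%N)
  (IH : forall th j, (j < i)%N -> outc (Pth th) s (wo_ (wo th) w0 j) = Some (fo_ (fo th) f0 j))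
  th : outc (Pth th) s (wo_ (wo th) w0 i) = Some (fo_ (fo th) f0 i).
Proof.
set w := wo_ (wo th) w0 i; set g := fo_ (fo th) f0 i.
case: (eqVneq (outc (Pth th) s w) (Some g)) => // ne; exfalso.
pose X : pred F := fun x => uw g w <= uw x w.
have Xg : X g by rewrite /X lexx.
set L := [seq x <- s w | X x && (x != g)] ++ g :: [seq x <- s w | ~~ X x].
set Qd := deviate s w L.
have hQw : Qd w = L by rewrite /Qd /deviate eqxx.
have hQo : forall w', w' != w -> Qd w' = s w'.
  by move=> w' ne'; rewrite /Qd /deviate (negbTE ne').
have uL : uniq L.
  rewrite cat_uniq; apply/and3P; split.
  - exact: filter_uniq.
  - apply/hasPn => x; rewrite in_cons => /orP [/eqP ->|xC].
      by rewrite mem_filter eqxx andbF.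
    by move: xC; rewrite !mem_filter => /andP [nX _]; rewrite (negbTE nX).
  - by rewrite /= mem_filter Xg /= filter_uniq.
have hwi : onth (wo th) i = Some w.
  rewrite /w /wo_ -onth_lt // (wo_size (Hspc th)); apply: leq_trans him (geq_minr _ _).
have hgi : onth (fo th) i = Some g.
  rewrite /g /fo_ -onth_lt // (fo_size (Hspc th)); apply: leq_trans him (geq_minl _ _).
have nB : forall x, outc (Pth th) s w = Some x -> ~~ (uw g w < uw x w).
  move=> x hx; apply/negP => lt.
  have [i' i'i hi'] := Hst th i g w x him hgi hwi lt th.
  have ex : nth f0 (fo th) i' = x by apply: onth_nth hi'.
  have := IH th i' i'i; rewrite /fo_ ex => h.
  have ew := outc_inj (HPth th) h hx.
  exact: (HwS (Hspc th) i'i him ew).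
have weak : forall th', worker_util uw (outcome uf s th') w <= worker_util uw (outcome uf Qd th') w.
  move=> th'; rewrite /worker_util !outcomeE.
  case ho: (outc (Pth th') s w) => [h|]; last by case: outc => // f; apply: ltW.
  case: (boolP (uw g w < uw h w)) => B.
  - have [i' i'i hi'] := Hst th i g w h him hgi hwi B th'.
    have eh : nth f0 (fo th') i' = h by apply: onth_nth hi'.
    have i'm : (i' < minn #|F| #|W|)%N by apply: ltn_trans i'i him.
    have hw' : wo_ (wo th') w0 i' = w.
      have := IH th' i' i'i; rewrite /fo_ eh => h1; exact: (outc_inj (HPth th') h1 ho).
    have Xh : X h by rewrite /X ltW.
    have hg : h != g by apply/eqP => e; rewrite e ltxx in B.
    have le := dev_caseA (HPth th') hQw hQo ho Xh hg.
    have hb : outc (Pth th') Qd (wo_ (wo th') w0 i') = Some (fo_ (fo th') f0 i').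
      apply: (spc_block (Hspc th') (K := i'.+1)) (ltnSn i') => // j hj; left.
      apply: leq_trans (le _) _.
      have hj' : (j < i)%N by apply: leq_trans hj i'i.
      by rewrite ((outc_target (HPth th') s _ _).1 (IH th' j hj')).
    by rewrite hw' /fo_ eh in hb; rewrite hb.
  - case hq: (outc (Pth th') Qd w) => [z|].
      case: (boolP (X z)) => Xz.
        apply: le_trans Xz; by rewrite leNgt.
      have hX : forall z', outc (Pth th') Qd w = Some z' -> ~~ X z'.
        by move=> z'; rewrite hq => -[<-].
      have [e _] := dev_caseB (HPth th') Xg hQw hQo hX.
      by rewrite hq ho in e; case: e => ->.
    have hX : forall z', outc (Pth th') Qd w = Some z' -> ~~ X z' by move=> z'; rewrite hq.
    have [e _] := dev_caseB (HPth th') Xg hQw hQo hX.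
    by rewrite hq ho in e.
have strict : worker_util uw (outcome uf s th) w < worker_util uw (outcome uf Qd th) w.
  rewrite /worker_util !outcomeE.
  have pg : prop (Pth th) (lfp (Pth th) s) g w.
    apply: (no_early (HPth th) (minn #|F| #|W|) (fo_ := fo_ (fo th) f0) (wo_ := wo_ (wo th) w0) (j := i)).
    - by move=> p pi; apply: (HfS (Hspc th) pi him).
    - by move=> w' lt; apply: (HPfS (Hspc th) him lt).
    - by move=> p pi; apply: IH.
  case hq: (outc (Pth th) Qd w) => [z|]; last first.
    have hX : forall z', outc (Pth th) Qd w = Some z' -> ~~ X z' by move=> z'; rewrite hq.
    have [_ np] := dev_caseB (HPth th) Xg hQw hQo hX.
    by rewrite (negbTE np) in pg.
  case: (boolP (X z)) => Xz; last first.
    have hX : forall z', outc (Pth th) Qd w = Some z' -> ~~ X z'.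
      by move=> z'; rewrite hq => -[<-].
    have [_ np] := dev_caseB (HPth th) Xg hQw hQo hX.
    by rewrite (negbTE np) in pg.
  case ho: (outc (Pth th) s w) => [x|]; last by apply: lt_le_trans (Hpw g w) Xz.
  have xg : x != g by apply/eqP => e; move: ne; rewrite ho e eqxx.
  have := nB x ho; rewrite -leNgt => lexg.
  apply: lt_le_trans Xz; rewrite lt_neqAle lexg andbT.
  by apply/eqP => e; move: xg; rewrite (@Hiw w _ _ e) eqxx.
have := Hb w L uL; rewrite leNgt => /negP; apply.
exact: exp_lt weak strict.
Qed.

Lemma uniq2 (Hst : SPC_star uf uw) s : BNE uf uw Psi s ->
  forall th, stable (uf th) uw (outcome uf s th).
Proof.
move=> [Hu Hb]; case: Hst => fo [wo [Hspc Hst]] th.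
apply: stable_of => w.
case: (pickP (@predT F)) => [f0 _|hF]; last first.
  case: outc => [f|]; first by move: (hF f).
  by case: outc => [f|] //; move: (hF f).
have key : forall i, (i <= minn #|F| #|W|)%N -> forall th' j, (j < i)%N ->
    outc (Pth th') s (wo_ (wo th') w j) = Some (fo_ (fo th') f0 j).
  elim => [|i IH] hi th' j //.
  rewrite ltnS leq_eqVlt => /orP [/eqP ->|lt]; last by apply: IH => //; apply: ltnW.
  by apply: (step2 Hspc Hst Hu Hb hi) => th'' j' hj'; apply: IH => //; apply: ltnW.
rewrite (spc_det (Hspc th) (key _ (leqnn _) th)).
by rewrite (spc_det (Hspc th) (fun j hj => sT_spc f0 w (Hspc th) hj)).
Qed.

End Econ.

Unset Implicit Arguments.

Theorem proposition1 (R : realFieldType) (F W Th : finType)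
    (uf : Th -> F -> W -> R) (uw : F -> W -> R) (Psi : Th -> R) :
  economy_ok uf uw Psi ->
  unique_stable uf uw ->
  common_firm_ranking uf \/ SPC_star uf uw ->
  (exists s : profile F W, BNE uf uw Psi s) /\
  (forall s : profile F W, BNE uf uw Psi s ->
     forall th : Th, stable (uf th) uw (outcome uf s th)).
Proof.
case=> HPsi _ [Hpf Hpw] Hif Hiw _ [Hc|Hst].
  split; first by exists (sT uw); exact: BNE_sT1.
  by move=> s; apply: uniq1.
split.
  exists (sT uw); apply: BNE_sT2 => // th.
  case: Hst => fo [wo [Hspc _]]; by exists (fo th), (wo th).
by move=> s; apply: uniq2.
Qed.
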